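(* For any finite poset $P$ of dimension $2$, either $sat^*([k]^2,P)=O(1)$ or $sat^*([k]^2,P)=\Theta(k)$ (as $k\to\infty$).
   Context: $[k]^2$ is ordered coordinatewise. The dimension of a poset $P$ is the least $d$ such that there are $d$ linear orders (permutations) $\pi_1,\dots,\pi_d$ of $P$ with $p<_Pq$ iff $\pi_i(p)<\pi_i(q)$ for all $i$. For posets $P,R$, $P$ is a strong subposet of $R$ if there is an injection $i:P\to R$ with $p\le_P p'\iff i(p)\le_R i(p')$. A subset $F\subseteq Q$ is strong $P$-saturated if $P$ is not a strong subposet of $F$ but for every $x\in Q\setminus F$, $P$ is a strong subposet of $F\cup\{x\}$. $sat^*(Q,P)$ is the minimum size of a strong $P$-saturated subset of $Q$. *)

(* Defs.v *)
From mathcomp Require Import all_boot.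
Set Implicit Arguments. Unset Strict Implicit. Unset Printing Implicit Defensive.

Definition is_partial_order (T : finType) (le : rel T) : Prop :=
  reflexive le /\ antisymmetric le /\ transitive le.

Definition strict (T : finType) (le : rel T) : rel T :=
  fun p q => (p != q) && le p q.

(* d linear orders pi_1..pi_d of P (each an injective ranking T -> nat)
   with p <_P q iff pi_i(p) < pi_i(q) for all i *)
Definition realizer (T : finType) (le : rel T) (d : nat) : Prop :=
  exists pi : 'I_d -> T -> nat,
    (forall i, injective (pi i)) /\
    (forall p q, strict le p q <-> (forall i, pi i p < pi i q)).

Definition poset_dim (T : finType) (le : rel T) (d : nat) : Prop :=
  realizer le d /\ (forall d', d' < d -> ~ realizer le d').

Definition grid (k : nat) : finType := ('I_k * 'I_k)%type.
Definition grid_le (k : nat) : rel (grid k) :=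
  fun a b => (a.1 <= b.1) && (a.2 <= b.2).

Definition strong_sub (T : finType) (le : rel T) (k : nat) (F : {set grid k}) : bool :=
  [exists f : {ffun T -> grid k},
     [&& injectiveb f,
         [forall x, f x \in F] &
         [forall p, forall q, le p q == grid_le (f p) (f q)]]].

Definition strong_saturated (T : finType) (le : rel T) (k : nat) (F : {set grid k}) : bool :=
  ~~ strong_sub le F && [forall x, (x \notin F) ==> strong_sub le (x |: F)].

(* sat^*([k]^2, P): minimum size of a strong P-saturated subset of [k]^2
   (default #|[k]^2| if none existed; one always exists for nonempty P,
   e.g. any maximal P-free set) *)
Definition sat_star (T : finType) (le : rel T) (k : nat) : nat :=
  \big[minn/#|grid k|]_(F : {set grid k} | strong_saturated le F) #|F|.

(* Main.v *)
Require Import Defs.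
From mathcomp Require Import all_boot.
From mathcomp Require Import zify.
From Stdlib Require Import Classical.
Set Implicit Arguments. Unset Strict Implicit. Unset Printing Implicit Defensive.

Lemma sorted_enum_ord N (A : {set 'I_N}) : sorted (fun x y : 'I_N => x < y) (enum A).
Proof.
have -> : enum A = filter (mem A) (enum 'I_N) by rewrite enumT.
apply: sorted_filter; first by move=> x y z; apply: ltn_trans.
have := iota_ltn_sorted 0 N; rewrite -val_enum_ord sorted_map; done.
Qed.

Lemma card_interval N (A : {set 'I_N}) lo n :
  (forall x, x \in A -> lo <= x < lo + n) -> #|A| <= n.
Proof.
move=> H; rewrite cardE -(size_map val) -(size_iota lo n).
apply: uniq_leq_size; first by rewrite (map_inj_uniq val_inj) enum_uniq.
move=> y /mapP [x]; rewrite mem_enum => /H Hx ->; rewrite mem_iota; exact Hx.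
Qed.

Lemma div_lt_lt a c b : a %/ b < c %/ b -> a < c.
Proof. by move=> H; rewrite ltnNge; apply/negP => /(leq_div2r b); rewrite leqNgt H. Qed.

Lemma sum_bool_card (I : finType) (A : {set I}) (P : pred I) :
  \sum_(i in A) (P i : nat) = #|[set i in A | P i]|.
Proof.
rewrite -sum1_card big_mkcond [RHS]big_mkcond /=.
by apply: eq_bigr => i _; rewrite !inE; case: (i \in A); case: (P i).
Qed.

Section Rank.
Variable T : finType.
Definition rank (q : T -> nat) p := #|[set r | q r < q p]|.
Lemma rank_lt q p : rank q p < #|T|.
Proof.
rewrite /rank -cardsT; apply: proper_card; rewrite properE subsetT /=.
by apply/subsetPn; exists p; rewrite ?inE ?ltnn.
Qed.
Lemma rank_mono q p p' : q p < q p' -> rank q p < rank q p'.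
Proof.
move=> H; apply: proper_card; rewrite properE; apply/andP; split.
  by apply/subsetP => r; rewrite !inE => /ltn_trans; apply.
by apply/subsetPn; exists p; rewrite !inE ?ltnn.
Qed.
End Rank.

Section MT.
Variable T : finType.
Variable N : nat.
Notation U := ('I_N * 'I_N)%type.
Variables q1 q2 : T -> nat.

Definition occG (c1 c2 : U -> 'I_N) (S : {set U}) :=
  exists g : T -> U, (forall p, g p \in S) /\
    (forall p p', q1 p < q1 p' -> c1 (g p) < c1 (g p')) /\
    (forall p p', q2 p < q2 p' -> c2 (g p) < c2 (g p')).

Variable b : nat.
Hypothesis b_gt0 : 0 < b.

Lemma build (c1 c2 : U -> 'I_N) (S : {set U}) (A Ys : {set 'I_N}) :
  #|T| <= #|A| -> #|T| <= #|Ys| ->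
  (forall a Y, a \in A -> Y \in Ys -> exists2 u, u \in S & c1 u = a /\ c2 u %/ b = Y) ->
  occG c1 c2 S.
Proof.
move=> HA HY H.
case: (pickP T) => [p0 _ | T0]; last first.
  exists (fun p => False_rect U (Bool.diff_true_false (T0 p))).
  by split=> [p|]; [case: (Bool.diff_true_false (T0 p))|split=> p; case: (Bool.diff_true_false (T0 p))].
have Tpos : 0 < #|T| by apply/card_gt0P; exists p0.
have [a0 _] : exists2 a0 : 'I_N, a0 \in A & True.
  have /card_gt0P [a Ha] : 0 < #|A| by apply: leq_trans HA.
  by exists a.
set ea := enum A; set eY := enum Ys.
have HaA p : nth a0 ea (rank q1 p) \in A.
  by rewrite -mem_enum; apply: mem_nth; rewrite -cardE; apply: leq_trans (rank_lt _ _) HA.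
have HyY p : nth a0 eY (rank q2 p) \in Ys.
  by rewrite -mem_enum; apply: mem_nth; rewrite -cardE; apply: leq_trans (rank_lt _ _) HY.
have /fin_all_exists [g Hg] : forall p, exists u : U,
    u \in S /\ c1 u = nth a0 ea (rank q1 p) /\ c2 u %/ b = nth a0 eY (rank q2 p).
  by move=> p; have [u Hu [H1 H2]] := H _ _ (HaA p) (HyY p); exists u.
exists g; split; first by move=> p; case: (Hg p).
split=> p p' Hpp'.
- case: (Hg p) => _ [-> _]; case: (Hg p') => _ [-> _].
  have ltT : transitive (fun x y : 'I_N => x < y) by move=> y x z; apply: ltn_trans.
  have := sorted_ltn_nth ltT a0 (sorted_enum_ord A); apply;
    rewrite ?inE -?cardE ?(leq_trans (rank_lt _ _) HA) //.
  exact: rank_mono.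
- case: (Hg p) => _ [_ E1]; case: (Hg p') => _ [_ E2].
  apply: (@div_lt_lt _ _ b); rewrite E1 E2.
  have ltT : transitive (fun x y : 'I_N => x < y) by move=> y x z; apply: ltn_trans.
  have := sorted_ltn_nth ltT a0 (sorted_enum_ord Ys); apply;
    rewrite ?inE -?cardE ?(leq_trans (rank_lt _ _) HY) //.
  exact: rank_mono.
Qed.

Definition cdiv (x : 'I_N) : 'I_N := Ordinal (leq_ltn_trans (leq_div x b) (ltn_ord x)).
Definition ctr (u : U) : U := (cdiv u.1, cdiv u.2).
Definition fiber (S : {set U}) (beta : U) := [set u in S | ctr u == beta].
Definition wide (c1 : U -> 'I_N) S beta := #|T| <= #|c1 @: fiber S beta|.

Lemma card_R (X : nat) : #|[set x : 'I_N | x %/ b == X]| <= b.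
Proof.
apply: (@card_interval _ _ (X * b)) => x; rewrite inE => /eqP E.
move: (divn_eq x b) (ltn_pmod x b_gt0); rewrite E; set r := x %% b; lia.
Qed.

Section Coord.
Variables c1 c2 : U -> 'I_N.
Hypothesis Hc1 : forall u, val (c1 (ctr u)) = c1 u %/ b.
Hypothesis Hc2 : forall u, val (c2 (ctr u)) = c2 u %/ b.
Hypothesis Hinj : forall u v, c1 u = c1 v -> c2 u = c2 v -> u = v.

Lemma contract (S : {set U}) : occG c1 c2 (ctr @: S) -> occG c1 c2 S.
Proof.
case=> g [Hg [H1 H2]].
have /fin_all_exists [h Hh] : forall p, exists u, u \in S /\ ctr u = g p.
  by move=> p; case/imsetP: (Hg p) => u Hu ->; exists u.
exists h; split; first by move=> p; case: (Hh p).
split=> p p' H; [move/H1: H | move/H2: H]; case: (Hh p) => _ <-; case: (Hh p') => _ <-;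
  rewrite ?Hc1 ?Hc2; apply: div_lt_lt.
Qed.

Lemma wide_col (S : {set U}) (X : 'I_N) : ~ occG c1 c2 S ->
  #|[set beta in ctr @: S | wide c1 S beta && (c1 beta == X)]| <= (#|T|).-1 * 'C(b, #|T|).
Proof.
move=> Hno; set W := [set beta in _ | _].
pose xs beta := c1 @: fiber S beta.
pose chA beta := odflt set0 [pick A : {set 'I_N} | (A \subset xs beta) && (#|A| == #|T|)].
have HchA beta : beta \in W -> chA beta \subset xs beta /\ #|chA beta| = #|T|.
  rewrite inE => /andP [_ /andP [Hw _]]; rewrite /chA; case: pickP => [A /andP [H1 /eqP H2] | H0] //=.
  exfalso; have: 0 < 'C(#|xs beta|, #|T|) by rewrite bin_gt0.
  by rewrite -cards_draws => /card_gt0P [A]; rewrite inE H0.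
set R := [set x : 'I_N | x %/ b == X].
have HR beta : beta \in W -> xs beta \subset R.
  rewrite inE => /andP [_ /andP [_ /eqP HX]]; apply/subsetP => x /imsetP [u].
  rewrite inE => /andP [_ /eqP Hu] ->; rewrite inE -Hc1 Hu HX.
  done.
rewrite -sum1_card (partition_big_imset chA) /=.
apply: (@leq_trans (\sum_(A in chA @: W) (#|T|).-1)).
  apply: leq_sum => A _; rewrite sum1dep_card; set Bs := [set x | _].
  rewrite leqNgt; apply/negP => HBs.
  have HBs' : #|T| <= #|Bs| by move: HBs; case: #|T|.
  have /card_gt0P [b0 Hb0] : 0 < #|Bs| by apply: leq_ltn_trans HBs.
  move: (Hb0); rewrite inE => /andP [Wb0 /eqP Eb0].
  apply: Hno; apply: (build (A := A) (Ys := c2 @: Bs)).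
  - by rewrite -Eb0 (proj2 (HchA _ Wb0)).
  - rewrite card_in_imset // => x y; rewrite !inE => /andP [/andP [_ /andP [_ /eqP Hx]] _].
    move=> /andP [/andP [_ /andP [_ /eqP Hy]] _] Hxy; apply: Hinj => //; by rewrite Hx Hy.
  - move=> a Y Ha /imsetP [beta]; rewrite inE => /andP [Wbeta /eqP Ebeta] ->.
    have := proj1 (HchA _ Wbeta) => /subsetP /(_ a); rewrite Ebeta => /(_ Ha) /imsetP [u].
    rewrite inE => /andP [uS /eqP Hu] ->; exists u => //; split => //.
    by rewrite -Hc2 Hu.
rewrite sum_nat_const mulnC leq_mul2l; apply/orP; right.
apply: (@leq_trans #|[set A : {set 'I_N} | A \subset R & #|A| == #|T|]|).
  apply: subset_leq_card; apply/subsetP => A /imsetP [beta Hbeta ->].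
  have [H1 H2] := HchA _ Hbeta; rewrite inE H2 eqxx andbT.
  exact: subset_trans H1 (HR _ Hbeta).
rewrite cards_draws; apply: leq_bin2l; exact: card_R.
Qed.

Lemma wide_total (S : {set U}) n : ~ occG c1 c2 S -> (forall beta, beta \in ctr @: S -> c1 beta < n) ->
  #|[set beta in ctr @: S | wide c1 S beta]| <= n * ((#|T|).-1 * 'C(b, #|T|)).
Proof.
move=> Hno Hn; set W := [set beta in _ | _].
rewrite -sum1_card (partition_big_imset c1) /=.
apply: (@leq_trans (\sum_(X in c1 @: W) ((#|T|).-1 * 'C(b, #|T|)))).
  apply: leq_sum => X _; rewrite sum1dep_card.
  apply: leq_trans (wide_col X Hno); rewrite leq_eqVlt; apply/orP; left; apply/eqP.
  by apply: eq_card => x; rewrite !inE andbA.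
rewrite sum_nat_const leq_mul2r; apply/orP; right.
apply: (@card_interval _ _ 0) => x /imsetP [beta]; rewrite inE => /andP [Hb _] ->.
exact: Hn.
Qed.
End Coord.

Lemma fiber_bound (S : {set U}) beta :
  #|fiber S beta| <= (#|T|).-1 * (#|T|).-1 + b * b * wide (fun u => u.1) S beta
                      + b * b * wide (fun u => u.2) S beta.
Proof.
have Hsub : fiber S beta \subset setX ((fun u => u.1) @: fiber S beta) ((fun u => u.2) @: fiber S beta).
  by apply/subsetP => u Hu; rewrite inE; apply/andP; split; apply: imset_f.
have := subset_leq_card Hsub; rewrite cardsX.
have H1 : #|(fun u => u.1) @: fiber S beta| <= b.
  apply: leq_trans (card_R beta.1); apply: subset_leq_card; apply/subsetP => x /imsetP [u].
  by rewrite !inE => /andP [_ /eqP <-] ->.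
have H2 : #|(fun u => u.2) @: fiber S beta| <= b.
  apply: leq_trans (card_R beta.2); apply: subset_leq_card; apply/subsetP => x /imsetP [u].
  by rewrite !inE => /andP [_ /eqP <-] ->.
rewrite /wide; move: H1 H2.
set x := #|_ @: _|; set y := #|_ @: _|; set z := #|fiber S beta|.
case: leqP => Hx; case: leqP => Hy /= H1 H2 Hz; nia.
Qed.
End MT.

Theorem MT_bound (T : finType) N (q1 q2 : T -> nat) : 0 < #|T| ->
  forall j (S : {set ('I_N * 'I_N)}),
  (forall u, u \in S -> u.1 < (#|T| * #|T|) ^ j /\ u.2 < (#|T| * #|T|) ^ j) ->
  ~ occG q1 q2 (fun u => u.1) (fun u => u.2) S ->
  #|S| <= (2 * ((#|T| * #|T|) * (#|T| * #|T|)) * ((#|T|).-1 * 'C(#|T| * #|T|, #|T|)) + 1)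
          * (#|T| * #|T|) ^ j.
Proof.
move=> Tpos; set m := #|T|; set b := m * m.
set K := (m.-1 * 'C(b, m)); set D := _ + 1.
have b_gt0 : 0 < b by rewrite /b muln_gt0 Tpos.
elim=> [|j IH] S HS Hno.
  rewrite expn0 muln1.
  have Hsub : S \subset setX ((fun u => u.1) @: S) ((fun u => u.2) @: S).
    by apply/subsetP => u Hu; rewrite inE; apply/andP; split; apply: imset_f.
  have H1 : #|(fun u => u.1) @: S| <= 1.
    apply: (@card_interval _ _ 0) => x /imsetP [u /HS]; rewrite expn0 => - [h _] ->; lia.
  have H2 : #|(fun u => u.2) @: S| <= 1.
    apply: (@card_interval _ _ 0) => x /imsetP [u /HS]; rewrite expn0 => - [_ h] ->; lia.
  have := subset_leq_card Hsub; rewrite cardsX; rewrite /D; nia.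
set B := ctr b @: S.
have HB : forall u, u \in B -> u.1 < b ^ j /\ u.2 < b ^ j.
  move=> beta /imsetP [u /HS [h1 h2] ->] /=; rewrite !ltn_divLR // -expnSr; done.
have HnoB : ~ occG q1 q2 (fun u => u.1) (fun u => u.2) B.
  by move=> H; apply: Hno; apply: (contract (c1 := fun u => u.1) (c2 := fun u => u.2)) H.
have IHB := IH B HB HnoB.
have Hno' : ~ occG q2 q1 (fun u => u.2) (fun u => u.1) S.
  by case=> g [Hg [H1 H2]]; apply: Hno; exists g.
have W1 := @wide_total _ _ _ _ _ b_gt0 (fun u => u.1) (fun u => u.2) (fun u => erefl) (fun u => erefl)
  (fun u v => _) _ (b ^ j) Hno.
have W2 := @wide_total _ _ _ _ _ b_gt0 (fun u => u.2) (fun u => u.1) (fun u => erefl) (fun u => erefl)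
  (fun u v => _) _ (b ^ j) Hno'.
have Hinj1 : forall u v : 'I_N * 'I_N, u.1 = v.1 -> u.2 = v.2 -> u = v.
  by move=> [u1 u2] [v1 v2] /= -> ->.
have {}W1 := W1 (fun u v h1 h2 => Hinj1 u v h1 h2) (fun beta Hb => proj1 (HB beta Hb)).
have {}W2 := W2 (fun u v h1 h2 => Hinj1 u v h2 h1) (fun beta Hb => proj2 (HB beta Hb)).
have HS' : #|S| = \sum_(beta in B) #|fiber b S beta|.
  by rewrite -sum1_card (partition_big_imset (ctr b)) /=; apply: eq_bigr => beta _; rewrite sum1dep_card.
have Hsum : #|S| <= \sum_(beta in B) (m.-1 * m.-1 + b * b * wide T b (fun u => u.1) S beta
                      + b * b * wide T b (fun u => u.2) S beta).
  by rewrite HS'; apply: leq_sum => beta _; apply: fiber_bound.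
rewrite !big_split /= sum_nat_const -!big_distrr /= !sum_bool_card in Hsum.
have Hm : m.-1 * m.-1 + 1 <= b.
  have Hk : forall k, 0 < k -> k.-1 * k.-1 + 1 <= k * k by case=> // k _ /=; nia.
  exact: Hk.
rewrite expnS.
move: Hsum IHB W1 W2 Hm; rewrite /D -/K.
set w1 := #|[set _ in _ | _]|; set w2 := #|[set _ in _ | _]|.
set x := #|B|; set P := b ^ j; set s := #|S|; set mm := m.-1 * m.-1.
move=> Hsum IHB W1 W2 Hm.
have E1 : b * b * w1 <= b * b * (P * K) by rewrite leq_mul2l W1 orbT.
have E2 : b * b * w2 <= b * b * (P * K) by rewrite leq_mul2l W2 orbT.
have E3 : x * mm <= (2 * (b * b) * K + 1) * P * mm by rewrite leq_mul2r IHB orbT.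
have E4 : (2 * (b * b) * K + 1) * P * (mm + 1) <= (2 * (b * b) * K + 1) * P * b.
  by rewrite leq_mul2l Hm orbT.
nia.
Qed.

Lemma bigmin_le (I : finType) (P : pred I) (f : I -> nat) d i :
  P i -> \big[minn/d]_(j | P j) f j <= f i.
Proof.
move=> Pi; have : i \in index_enum I by rewrite mem_index_enum.
elim: (index_enum I) => // j r IH; rewrite inE big_cons => /orP [/eqP <- | /IH H].
  by rewrite Pi geq_minl.
by case: (P j) => //; rewrite geq_min H orbT.
Qed.

Lemma bigmin_attained (I : finType) (P : pred I) (f : I -> nat) d :
  \big[minn/d]_(j | P j) f j = d \/ exists2 i, P i & \big[minn/d]_(j | P j) f j = f i.
Proof.
apply: (big_ind (fun v => v = d \/ exists2 i, P i & v = f i)); first by left.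
  move=> x y Hx Hy /=; have [->|->] : minn x y = x \/ minn x y = y by lia.
  by []. by [].
by move=> i Pi; right; exists i.
Qed.

Lemma bigmin_le_d (I : finType) (P : pred I) (f : I -> nat) d :
  \big[minn/d]_(j | P j) f j <= d.
Proof.
apply: (big_rec (fun v => v <= d)) => // i x _ Hx; by rewrite geq_min Hx orbT.
Qed.

Lemma sat_le (T : finType) (le : rel T) k (F : {set grid k}) :
  strong_saturated le F -> sat_star le k <= #|F|.
Proof. move=> H; exact: (@bigmin_le _ (@strong_saturated T le k) (fun F : {set grid k} => #|F|) #|grid k| F H). Qed.

Lemma sat_le_sq (T : finType) (le : rel T) k : sat_star le k <= k * k.
Proof.
have E : #|grid k| = k * k by rewrite /grid card_prod card_ord.
by rewrite -E; apply: bigmin_le_d.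
Qed.

Lemma sat_attained (T : finType) (le : rel T) k : sat_star le k < k * k ->
  exists2 F : {set grid k}, strong_saturated le F & #|F| = sat_star le k.
Proof.
rewrite /sat_star; case: (bigmin_attained (@strong_saturated T le k) (fun F : {set grid k} => #|F|) #|grid k|) => [->|[F HF ->]].
  by rewrite /grid card_prod card_ord ltnn.
by exists F.
Qed.

Lemma exists_saturated (T : finType) (le : rel T) k :
  #|T| > 0 -> exists2 F : {set grid k}, strong_saturated le F & ~~ strong_sub le F.
Proof.
move=> Tpos.
have free0 : ~~ strong_sub le (set0 : {set grid k}).
  apply/negP => /existsP [f /and3P [_ /forallP H _]].
  by have /card_gt0P [p _] := Tpos; move: (H p); rewrite inE.
pose F := [arg max_(G > (set0 : {set grid k}) | ~~ strong_sub le G) #|G|].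
case: (@arg_maxnP _ (set0 : {set grid k}) (fun G => ~~ strong_sub le G) (fun G => #|G|) free0).
move=> G HG Hmax; exists G => //; rewrite /strong_saturated HG /=.
apply/forallP => x; apply/implyP => Hx; case Hs: (strong_sub le (x |: G)) => //.
have := Hmax _ (negbT Hs); rewrite cardsU1 Hx; lia.
Qed.

Lemma occ_strong (T : finType) (le : rel T) k (F : {set grid k}) (pi : 'I_2 -> T -> nat) :
  reflexive le -> (forall i, injective (pi i)) ->
  (forall p q, strict le p q <-> (forall i, pi i p < pi i q)) ->
  occG (pi ord0) (pi ord_max) (fun u : 'I_k * 'I_k => u.1) (fun u => u.2) F -> strong_sub le F.
Proof.
move=> Hrefl Hinj Hreal [g [Hg [H1 H2]]].
have key : forall p q, p != q ->
    ((g p).1 <= (g q).1) = (pi ord0 p < pi ord0 q) /\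
    ((g p).2 <= (g q).2) = (pi ord_max p < pi ord_max q).
  move=> p q npq.
  have n0 : pi ord0 p != pi ord0 q by apply: contra npq => /eqP /Hinj ->.
  have n1 : pi ord_max p != pi ord_max q by apply: contra npq => /eqP /Hinj ->.
  split.
    case: (ltngtP (pi ord0 p) (pi ord0 q)) => h.
    - by rewrite (ltnW (H1 _ _ h)).
    - by rewrite leqNgt (H1 _ _ h).
    - by rewrite h eqxx in n0.
  case: (ltngtP (pi ord_max p) (pi ord_max q)) => h.
  - by rewrite (ltnW (H2 _ _ h)).
  - by rewrite leqNgt (H2 _ _ h).
  - by rewrite h eqxx in n1.
apply/existsP; exists (finfun g); apply/and3P; split.
- apply/injectiveP => p q; rewrite !ffunE => E; apply/eqP; apply/negPn/negP => npq.
  have [k1 _] := key p q npq; have [k2 _] := key q p ltac:(by rewrite eq_sym).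
  rewrite E leqnn in k1; rewrite E leqnn in k2.
  by have := ltn_trans (esym k1) (esym k2); rewrite ltnn.
- by apply/forallP => p; rewrite ffunE Hg.
- apply/forallP => p; apply/forallP => q; rewrite !ffunE /grid_le.
  case: (eqVneq p q) => [-> | npq]; first by rewrite Hrefl !leqnn.
  have [-> ->] := key p q npq.
  have -> : le p q = strict le p q by rewrite /strict npq.
  apply/eqP; apply/idP/idP.
  + by move/Hreal => h; rewrite !h.
  + move/andP => [a b]; apply/Hreal => i.
    have : (i == ord0) || (i == ord_max) by case: i => [[|[|]]].
    by case/orP => /eqP ->.
Qed.

Section Ins.
Variable k : nat.
Variable c : nat.
Hypothesis ck : c < k.+1.

Definition ins (i : 'I_k.+1) : 'I_k.+2 := inord (if i <= c then i : nat else i.+1).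
Definition col (a : 'I_k.+2) : 'I_k.+1 := inord (if c < a then (a : nat).-1 else a).

Lemma ins_val i : (ins i : nat) = if i <= c then i : nat else i.+1.
Proof. rewrite /ins inordK //; have := ltn_ord i; case: ifP => hh; lia. Qed.
Lemma col_val a : (col a : nat) = if c < a then (a : nat).-1 else a.
Proof. rewrite /col inordK //; have := ltn_ord a; case: ifP => hh; lia. Qed.

Lemma colK i : col (ins i) = i.
Proof. apply: val_inj => /=; rewrite col_val ins_val; case: (leqP i c) => h /=; case: ifP => h'; lia. Qed.
Lemma ins_le (i i' : 'I_k.+1) : (ins i <= ins i') = (i <= i').
Proof. rewrite !ins_val; case: (leqP i c) => h; case: (leqP i' c) => h' /=; lia. Qed.
Lemma ins_le_l (i : 'I_k.+1) (a : 'I_k.+2) : (i : nat) != c -> (a <= ins i) = (col a <= i).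
Proof. rewrite ins_val col_val => h; case: (leqP i c) => h1; case: (ltnP c a) => h2 /=; lia. Qed.
Lemma ins_le_r (i : 'I_k.+1) (a : 'I_k.+2) : (i : nat) != c -> (ins i <= a) = (i <= col a).
Proof. rewrite ins_val col_val => h; case: (leqP i c) => h1; case: (ltnP c a) => h2 /=; lia. Qed.
Lemma insK (a : 'I_k.+2) : (col a : nat) != c -> a = ins (col a).
Proof. rewrite col_val => h; apply: val_inj => /=; rewrite ins_val col_val; move: h.
  have := ltn_ord a; case: ifP => h1; case: ifP => h2; lia. Qed.
Lemma ins_neq (i : 'I_k.+1) : (i : nat) != c -> (ins i : nat) != c.
Proof. rewrite ins_val; case: ifP => hh; lia. Qed.
End Ins.

Section Step.
Variables (T : finType) (le : rel T) (k : nat) (c r : 'I_k.+1).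

Definition INS (u : grid k.+1) : grid k.+2 := (ins c u.1, ins r u.2).
Definition COL (a : grid k.+2) : grid k.+1 := (col c a.1, col r a.2).

Lemma COLK u : COL (INS u) = u.
Proof. by case: u => u1 u2; rewrite /COL /INS /= !colK. Qed.
Lemma INS_inj : injective INS.
Proof. by move=> u v E; rewrite -(COLK u) E COLK. Qed.
Lemma INS_le u v : grid_le (INS u) (INS v) = grid_le u v.
Proof. by rewrite /grid_le /INS /= !ins_le. Qed.
Lemma INS_le_l u a : u.1 != c -> u.2 != r -> grid_le a (INS u) = grid_le (COL a) u.
Proof. by move=> h1 h2; rewrite /grid_le /INS /COL /= !ins_le_l. Qed.
Lemma INS_le_r u a : u.1 != c -> u.2 != r -> grid_le (INS u) a = grid_le u (COL a).
Proof. by move=> h1 h2; rewrite /grid_le /INS /COL /= !ins_le_r. Qed.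
Lemma INSK a : (COL a).1 != c -> (COL a).2 != r -> a = INS (COL a).
Proof. by case: a => a1 a2 /= h1 h2; rewrite /INS /= -!insK. Qed.

Lemma step (F : {set grid k.+1}) :
  (forall u, u \in F -> u.1 != c) -> (forall u, u \in F -> u.2 != r) ->
  strong_saturated le F -> strong_saturated le (INS @: F).
Proof.
move=> Hc Hr /andP [Hfree /forallP Hsat].
have HF' v : v \in INS @: F -> exists2 u, u \in F & v = INS u by case/imsetP => u Hu ->; exists u.
apply/andP; split.
  apply: contra Hfree => /existsP [f /and3P [/injectiveP finj /forallP fin /forallP ford]].
  apply/existsP; exists (finfun (fun p => COL (f p))); apply/and3P; split.
  - apply/injectiveP => p q; rewrite !ffunE.
    have [u Hu Eu] := HF' _ (fin p); have [v Hv Ev] := HF' _ (fin q).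
    by rewrite Eu Ev !COLK => E; apply: finj; rewrite Eu Ev E.
  - by apply/forallP => p; rewrite ffunE; have [u Hu ->] := HF' _ (fin p); rewrite COLK.
  - apply/forallP => p; apply/forallP => q; rewrite !ffunE.
    have := forallP (ford p) q.
    have [u Hu Eu] := HF' _ (fin p); have [v Hv Ev] := HF' _ (fin q).
    by rewrite Eu Ev !COLK INS_le.
apply/forallP => x; apply/implyP => Hx.
case HX: (COL x \in F).
  exfalso; move/negP: Hx; apply; rewrite (INSK (Hc _ HX) (Hr _ HX)); exact: imset_f.
have := Hsat (COL x); rewrite HX /= => /existsP [g /and3P [/injectiveP ginj /forallP gin /forallP gord]].
pose h p := if g p == COL x then x else INS (g p).
have gF p : g p != COL x -> g p \in F.
  by move=> h1; move: (gin p); rewrite in_setU1 (negbTE h1).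
have gle p q : grid_le (h p) (h q) = grid_le (g p) (g q).
  rewrite /h; case: eqP => [E1|/eqP N1]; case: eqP => [E2|/eqP N2].
  - by rewrite E1 E2 /grid_le !leqnn.
  - have := gF _ N2 => H2; rewrite E1 INS_le_l ?(Hc _ H2) ?(Hr _ H2) //.
  - have := gF _ N1 => H1; rewrite E2 INS_le_r ?(Hc _ H1) ?(Hr _ H1) //.
  - by rewrite INS_le.
apply/existsP; exists (finfun h); apply/and3P; split.
- apply/injectiveP => p q; rewrite !ffunE /h.
  case: eqP => [E1|/eqP N1]; case: eqP => [E2|/eqP N2].
  + by move=> _; apply: ginj; rewrite E1 E2.
  + move=> E; exfalso; move/negP: Hx; apply; rewrite E; exact: imset_f (gF _ N2).
  + move=> E; exfalso; move/negP: Hx; apply; rewrite -E; exact: imset_f (gF _ N1).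
  + by move/INS_inj; apply: ginj.
- apply/forallP => p; rewrite ffunE /h; case: eqP => [_|/eqP N1]; first by rewrite setU11.
  by rewrite in_setU1 imset_f ?orbT ?gF.
- apply/forallP => p; apply/forallP => q; rewrite !ffunE gle; exact: forallP (gord p) q.
Qed.
End Step.

Definition Good (T : finType) (le : rel T) s k :=
  exists F : {set grid k}, [/\ strong_saturated le F, #|F| = s,
    exists2 c, c < k & (forall u, u \in F -> (u.1 : nat) != c) &
    exists2 r, r < k & (forall u, u \in F -> (u.2 : nat) != r)].

Lemma good_step (T : finType) (le : rel T) s k : Good le s k.+1 -> Good le s k.+2.
Proof.
case=> F [Hs Hcard [c ck Hc] [r rk Hr]].
pose C := Ordinal ck; pose R := Ordinal rk.
exists (INS C R @: F); split.
- have H1 : forall u, u \in F -> u.1 != C by move=> u Hu; apply: contra (Hc u Hu) => /eqP ->.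
  have H2 : forall u, u \in F -> u.2 != R by move=> u Hu; apply: contra (Hr u Hu) => /eqP ->.
  exact: step H1 H2 Hs.
- by rewrite card_imset // => u v; apply: INS_inj.
- exists c; first exact: (leq_trans ck (leqnSn _)).
  move=> u /imsetP [v Hv ->] /=; exact: (@ins_neq _ C) (Hc v Hv).
- exists r; first exact: (leq_trans rk (leqnSn _)).
  move=> u /imsetP [v Hv ->] /=; exact: (@ins_neq _ R) (Hr v Hv).
Qed.

Lemma good_all (T : finType) (le : rel T) s k0 : 0 < k0 -> Good le s k0 ->
  forall k, k0 <= k -> Good le s k.
Proof.
move=> k0pos G0; elim=> [|k IH] hk; first by move: hk; rewrite leqn0 => /eqP E; move: k0pos; rewrite E.
case: (eqVneq k0 k.+1) => [<- //|ne].
have hk' : k0 <= k by move: hk ne; rewrite leq_eqVlt => /orP [/eqP ->|]; rewrite ?eqxx.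
move: (IH hk'); case: k {IH hk ne} hk' => [|k] hk'; first by move: k0pos; lia.
exact: good_step.
Qed.

Lemma empty_line k (F : {set grid k}) (pr : grid k -> 'I_k) : #|F| < k ->
  exists2 c, c < k & forall u, u \in F -> (pr u : nat) != c.
Proof.
move=> Hlt.
have : ~~ ([set: 'I_k] \subset pr @: F).
  apply/negP => Hsub; have := subset_leq_card Hsub; rewrite cardsT card_ord.
  move=> h2; have := leq_trans h2 (leq_imset_card pr F); lia.
case/subsetPn => c _ Hc; exists c => // u Hu; apply: contra Hc => /eqP E.
by apply/imsetP; exists u => //; apply: val_inj.
Qed.

Theorem theorem1p8 (T : finType) (le : rel T) :
  is_partial_order le -> poset_dim le 2 ->
  (exists C : nat, forall k, sat_star le k <= C) \/
  (exists c K : nat, 0 < c /\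
     forall k, K <= k -> k <= c * sat_star le k /\ sat_star le k <= c * k).
Proof.
move=> [Hrefl [Hanti Htrans]] [[pi [Hinj Hreal]] Hmin].
have T2 : 1 < #|T|.
  case: (leqP #|T| 1) => // T1; exfalso.
  have Heq : forall x y : T, x = y.
    by move=> x y; move/card_le1_eqP: T1; apply.
  apply: (Hmin 1 erefl); exists (fun _ _ => 0); split.
    by move=> i x y _; apply: Heq.
  move=> p q; rewrite (Heq p q) /strict eqxx /=; split => // /(_ ord0); by rewrite ltnn.
have Tpos : 0 < #|T| by apply: ltnW.
case: (classic (exists k0, 0 < k0 /\ sat_star le k0 < k0)) => [[k0 [k0pos Hk0]]|Hno].
  left; set s := sat_star le k0.
  have [F HF Fcard] : exists2 F : {set grid k0}, strong_saturated le F & #|F| = s.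
    apply: sat_attained; apply: leq_trans Hk0 _; by rewrite leq_pmulr.
  have G0 : Good le s k0.
    exists F; split => //.
    - by apply: empty_line; rewrite Fcard.
    - by apply: (@empty_line _ F (fun u => u.2)); rewrite Fcard.
  exists (k0 * k0 + s) => k; case: (leqP k0 k) => h.
    have [G [HG Gc _ _]] := good_all k0pos G0 h.
    by apply: leq_trans (sat_le HG) _; rewrite Gc leq_addl.
  apply: leq_trans (sat_le_sq le k) _; apply: leq_trans (leq_addr s _).
  by apply: leq_mul; apply: ltnW.
right.
have Hge : forall k, k <= sat_star le k.
  move=> k; case: (posnP k) => [->//|kpos]; rewrite leqNgt; apply/negP => h.
  by apply: Hno; exists k.
set m := #|T|; set b := m * m.
set D := (2 * (b * b) * (m.-1 * 'C(b, m)) + 1).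
have b2 : 1 < b by rewrite /b; nia.
have Dpos : 0 < D by rewrite /D addn1.
have DB : 0 < D * b by rewrite muln_gt0 Dpos (ltnW b2).
exists (D * b), 0; split; first exact: DB.
move=> k _; split.
  by apply: leq_trans (Hge k) _; rewrite leq_pmull.
case: (posnP k) => [->|kpos].
  by move: (sat_le_sq le 0); rewrite !muln0.
have [F HF Hfree] := exists_saturated le k Tpos.
apply: leq_trans (sat_le HF) _.
have Hnocc : ~ occG (pi ord0) (pi ord_max) (fun u : 'I_k * 'I_k => u.1) (fun u => u.2) F.
  move=> H; move/negP: Hfree; apply; apply: occ_strong H => //.
set j := (trunc_log b k).+1.
have Hbox : forall u : 'I_k * 'I_k, u \in F -> u.1 < b ^ j /\ u.2 < b ^ j.
  move=> u _; have := trunc_log_ltn k b2; rewrite -/j => h.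
  by split; apply: leq_trans h; apply: ltnW; apply: leq_ltn_trans (ltn_ord _) _.
have := MT_bound Tpos Hbox Hnocc; rewrite -/m -/b -/D => HFb.
apply: leq_trans HFb _; rewrite -mulnA leq_mul2l; apply/orP; right.
by rewrite /j expnS leq_mul2l trunc_logP ?orbT.
Qed.
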